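(* Consider $N$ double-integrator agents $$\dot x_i=v_i,\qquad \dot v_i=\sum_{j=1}^N\alpha_{ij}\big((x_j-x_i)+(y_j-y_i)\big),\qquad y_i=\mathrm{sat}(v_i),\qquad i\in\{1,\dots,N\},$$ where the constant weights $\alpha_{ij}=\alpha_{ji}\ge0$ define an undirected connected graph and $\mathrm{sat}(v)=\mathrm{sign}(v)\min\{|v|,s\}$ with a common level $s>0$. Assume the agents are not in consensus at $t_0$ (i.e. it is not the case that all $x_i(t_0)$ are equal and all $v_i(t_0)$ are equal). Then $\lim_{t\to\infty}(x_i(t)-x_j(t))=0$ and $\lim_{t\to\infty}(v_i(t)-v_j(t))=0$ for all $i,j$ if and only if $$\frac1N\Big|\sum_{i=1}^N v_i(t_0)\Big|\le s.$$
   Context: The graph is connected if any two nodes are joined by a path of edges $\{i,j\}$ with $\alpha_{ij}>0$. *)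

(* Defs.v *)
From Stdlib Require Import Reals Lra List.
Import ListNotations.
Open Scope R_scope.

(* Sum over agents i = 0, ..., N-1 (agents are indexed 0..N-1). *)
Definition sumN (N : nat) (f : nat -> R) : R :=
  fold_right Rplus 0 (map f (seq 0 N)).

Definition sign (v : R) : R :=
  if Rlt_dec 0 v then 1 else if Rlt_dec v 0 then -1 else 0.

Definition sat (s v : R) : R := sign v * Rmin (Rabs v) s.

Inductive walk (N : nat) (alpha : nat -> nat -> R) : nat -> nat -> Prop :=
  | walk_refl : forall i, (i < N)%nat -> walk N alpha i i
  | walk_step : forall i k j, (i < N)%nat -> (k < N)%nat ->
      0 < alpha i k -> walk N alpha k j -> walk N alpha i j.

Definition connected_graph (N : nat) (alpha : nat -> nat -> R) : Prop :=
  forall i j, (i < N)%nat -> (j < N)%nat -> walk N alpha i j.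

Definition tends_to_0_at_infty (f : R -> R) : Prop :=
  forall eps, 0 < eps -> exists T, forall t, T <= t -> Rabs (f t) < eps.

(* Main.v *)
Require Import Defs.
From Stdlib Require Import Reals Lra Lia List FunctionalExtensionality.
Import ListNotations.
Open Scope R_scope.


Lemma fold_plus_acc (l : list R) (a : R) :
  fold_right Rplus a l = fold_right Rplus 0 l + a.
Proof. induction l as [|b l IH]; simpl; [lra| rewrite IH; lra]. Qed.

Lemma sumN_0 f : sumN 0 f = 0.
Proof. reflexivity. Qed.

Lemma sumN_S n f : sumN (S n) f = sumN n f + f n.
Proof.
  unfold sumN. rewrite seq_S, map_app, fold_right_app. simpl.
  rewrite fold_plus_acc. lra.
Qed.

Lemma sumN_ext n f g : (forall i, (i < n)%nat -> f i = g i) -> sumN n f = sumN n g.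
Proof.
  induction n; intros H; [reflexivity|]. rewrite !sumN_S, IHn, (H n); [reflexivity|lia|intros; apply H; lia].
Qed.

Lemma sumN_plus n f g : sumN n (fun i => f i + g i) = sumN n f + sumN n g.
Proof. induction n; [rewrite ?sumN_0; lra|]. rewrite !sumN_S, IHn; lra. Qed.

Lemma sumN_minus n f g : sumN n (fun i => f i - g i) = sumN n f - sumN n g.
Proof. induction n; [rewrite ?sumN_0; lra|]. rewrite !sumN_S, IHn; lra. Qed.

Lemma sumN_scal n c f : sumN n (fun i => c * f i) = c * sumN n f.
Proof. induction n; [rewrite ?sumN_0; lra|]. rewrite !sumN_S, IHn; lra. Qed.

Lemma sumN_const n c : sumN n (fun _ => c) = INR n * c.
Proof. induction n; [rewrite sumN_0; simpl; ring|]. rewrite !sumN_S, IHn, S_INR; ring. Qed.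

Lemma sumN_le n f g : (forall i, (i < n)%nat -> f i <= g i) -> sumN n f <= sumN n g.
Proof.
  induction n; intros H; [rewrite ?sumN_0; lra|]. rewrite !sumN_S.
  assert (f n <= g n) by (apply H; lia).
  assert (sumN n f <= sumN n g) by (apply IHn; intros; apply H; lia). lra.
Qed.

Lemma sumN_nonneg n f : (forall i, (i < n)%nat -> 0 <= f i) -> 0 <= sumN n f.
Proof.
  intros H. replace 0 with (sumN n (fun _ => 0)).
  - apply sumN_le; auto.
  - rewrite sumN_const; lra.
Qed.

Lemma sumN_term n f k : (forall i, (i < n)%nat -> 0 <= f i) -> (k < n)%nat -> f k <= sumN n f.
Proof.
  induction n; intros H Hk; [lia|]. rewrite sumN_S.
  assert (0 <= sumN n f) by (apply sumN_nonneg; intros; apply H; lia).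
  destruct (Nat.eq_dec k n) as [->|Hne].
  - lra.
  - assert (f k <= sumN n f) by (apply IHn; [intros; apply H; lia| lia]).
    assert (0 <= f n) by (apply H; lia). lra.
Qed.

Lemma sumN_swap n m F :
  sumN n (fun i => sumN m (fun j => F i j)) = sumN m (fun j => sumN n (fun i => F i j)).
Proof.
  induction n.
  - rewrite sumN_0. symmetry. replace (fun j => sumN 0 (fun i => F i j)) with (fun _:nat => 0).
    + rewrite sumN_const; lra.
    + apply functional_extensionality; intros; reflexivity.
  - rewrite sumN_S, IHn.
    replace (fun j => sumN (S n) (fun i => F i j)) with (fun j => sumN n (fun i => F i j) + F n j).
    + rewrite sumN_plus; reflexivity.
    + apply functional_extensionality; intros; rewrite sumN_S; reflexivity.
Qed.

Lemma dpl_ext f g x l : (forall t, f t = g t) -> derivable_pt_lim f x l -> derivable_pt_lim g x l.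
Proof.
  intros H. replace g with f; auto. apply functional_extensionality; auto.
Qed.

Lemma dpl_val f x l l' : l = l' -> derivable_pt_lim f x l -> derivable_pt_lim f x l'.
Proof. intros ->; auto. Qed.

Lemma dpl_plus f g x a b : derivable_pt_lim f x a -> derivable_pt_lim g x b ->
  derivable_pt_lim (fun t => f t + g t) x (a + b).
Proof. intros. apply (derivable_pt_lim_plus f g); auto. Qed.

Lemma dpl_minus f g x a b : derivable_pt_lim f x a -> derivable_pt_lim g x b ->
  derivable_pt_lim (fun t => f t - g t) x (a - b).
Proof. intros. apply (derivable_pt_lim_minus f g); auto. Qed.

Lemma dpl_mult f g x a b : derivable_pt_lim f x a -> derivable_pt_lim g x b ->
  derivable_pt_lim (fun t => f t * g t) x (a * g x + f x * b).
Proof. intros. apply (derivable_pt_lim_mult f g); auto. Qed.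

Lemma dpl_const c x : derivable_pt_lim (fun _ => c) x 0.
Proof. apply (derivable_pt_lim_const c). Qed.

Lemma dpl_scal c f x a : derivable_pt_lim f x a -> derivable_pt_lim (fun t => c * f t) x (c * a).
Proof.
  intros H. apply (dpl_val _ _ (0 * f x + c * a)); [ring|].
  apply (dpl_mult (fun _ => c) f); auto using dpl_const.
Qed.

Lemma dpl_sumN n (f : nat -> R -> R) d x :
  (forall i, (i < n)%nat -> derivable_pt_lim (f i) x (d i)) ->
  derivable_pt_lim (fun t => sumN n (fun i => f i t)) x (sumN n d).
Proof.
  induction n; intros H.
  - apply (dpl_ext (fun _ => 0)); [intros; reflexivity|]. apply dpl_const.
  - apply (dpl_ext (fun t => sumN n (fun i => f i t) + f n t)); [intros; rewrite sumN_S; reflexivity|].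
    rewrite sumN_S. apply dpl_plus; [apply IHn; intros; apply H; lia| apply H; lia].
Qed.

Lemma nonincr f f' a : (forall t, a <= t -> derivable_pt_lim f t (f' t)) ->
  (forall t, a <= t -> f' t <= 0) -> forall t1 t2, a <= t1 -> t1 <= t2 -> f t2 <= f t1.
Proof.
  intros Hd Hn t1 t2 H1 H2. destruct (Rle_lt_or_eq_dec _ _ H2) as [Hlt|<-]; [|lra].
  destruct (MVT_cor2 f f' t1 t2 Hlt) as [c [Hc Hc2]].
  - intros c Hc. apply Hd. lra.
  - assert (f' c <= 0) by (apply Hn; lra). nra.
Qed.


Lemma sqn (x : R) : 0 <= x * x.
Proof. pose proof (Rle_0_sqr x); unfold Rsqr in *; lra. Qed.

Definition clamp s v := Rmax (-s) (Rmin v s).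

Lemma sat_clamp s v : 0 < s -> sat s v = clamp s v.
Proof.
  intros Hs. unfold sat, sign, clamp, Rmin, Rmax.
  destruct (Rlt_dec 0 v); [|destruct (Rlt_dec v 0)];
  repeat (destruct Rle_dec); unfold Rabs in *; repeat destruct Rcase_abs; lra.
Qed.

Lemma clamp_mono s a b : 0 < s -> a <= b -> clamp s a <= clamp s b.
Proof. intros. unfold clamp, Rmin, Rmax. repeat destruct Rle_dec; lra. Qed.

Lemma clamp_lip1 s a b : 0 < s -> (clamp s a - clamp s b) * (clamp s a - clamp s b) <= (a - b) * (clamp s a - clamp s b).
Proof. intros. unfold clamp, Rmin, Rmax. repeat destruct Rle_dec; nra. Qed.

Lemma clamp_lip2 s a b : 0 < s -> (a - b) * (clamp s a - clamp s b) <= (a - b) * (a - b).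
Proof. intros. pose proof (Rle_0_sqr (a-b)); unfold Rsqr in *. unfold clamp, Rmin, Rmax. repeat destruct Rle_dec; nra. Qed.

Lemma clamp_hi s v : 0 < s -> s < v -> clamp s v = s.
Proof. intros. unfold clamp, Rmin, Rmax. repeat destruct Rle_dec; lra. Qed.
Lemma clamp_lo s v : 0 < s -> v < -s -> clamp s v = -s.
Proof. intros. unfold clamp, Rmin, Rmax. repeat destruct Rle_dec; lra. Qed.

Definition symm N (al : nat -> nat -> R) := forall i j, (i<N)%nat -> (j<N)%nat -> al i j = al j i.
Definition nneg N (al : nat -> nat -> R) := forall i j, (i<N)%nat -> (j<N)%nat -> 0 <= al i j.

Definition Lap N al (a : nat -> R) i := sumN N (fun j => al i j * (a i - a j)).
Definition Bf N al (a b : nat -> R) :=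
  sumN N (fun i => sumN N (fun j => al i j * ((a i - a j) * (b i - b j)))).
Definition Qf N al (a : nat -> R) := Bf N al a a.
Definition Atot N (al : nat -> nat -> R) := sumN N (fun i => sumN N (fun j => al i j)).

Lemma lap_dot N al c a : symm N al ->
  sumN N (fun i => c i * Lap N al a i) = / 2 * Bf N al c a.
Proof.
  intros Hs. set (G := fun i j => al i j * (c i * (a i - a j))).
  assert (E1 : sumN N (fun i => c i * Lap N al a i) = sumN N (fun i => sumN N (fun j => G i j))).
  { apply sumN_ext; intros i Hi. unfold Lap. rewrite <- sumN_scal. apply sumN_ext; intros; unfold G; ring. }
  assert (E2 : sumN N (fun i => sumN N (fun j => G j i)) = sumN N (fun i => sumN N (fun j => G i j))).
  { rewrite sumN_swap. reflexivity. }
  assert (E3 : Bf N al c a = sumN N (fun i => sumN N (fun j => G i j)) + sumN N (fun i => sumN N (fun j => G j i))).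
  { rewrite <- sumN_plus. apply sumN_ext; intros i Hi. rewrite <- sumN_plus. apply sumN_ext; intros j Hj.
    unfold G. rewrite (Hs j i) by auto. ring. }
  rewrite E1, E3, E2. field.
Qed.

Lemma Bf_shift N al a b m : Bf N al (fun i => a i - m) b = Bf N al a b.
Proof. unfold Bf. apply sumN_ext; intros. apply sumN_ext; intros. ring. Qed.

Lemma Bf_comm N al a b : Bf N al a b = Bf N al b a.
Proof. unfold Bf. apply sumN_ext; intros. apply sumN_ext; intros. ring. Qed.

Lemma lap_sum0 N al a : symm N al -> sumN N (fun i => Lap N al a i) = 0.
Proof.
  intros Hs. transitivity (sumN N (fun i => (fun _ => 1) i * Lap N al a i)).
  { apply sumN_ext; intros; ring. }
  rewrite lap_dot by auto. unfold Bf.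
  rewrite (sumN_ext _ _ (fun _ => 0)).
  - rewrite sumN_const; ring.
  - intros. rewrite (sumN_ext _ _ (fun _ => 0)); [rewrite sumN_const; ring|]. intros; ring.
Qed.

Lemma Qf_nonneg N al a : nneg N al -> 0 <= Qf N al a.
Proof.
  intros Hn. apply sumN_nonneg; intros. apply sumN_nonneg; intros.
  apply Rmult_le_pos; [apply Hn; auto| apply sqn].
Qed.

Lemma Qf_term N al a i j : nneg N al -> (i < N)%nat -> (j < N)%nat ->
  al i j * ((a i - a j) * (a i - a j)) <= Qf N al a.
Proof.
  intros Hn Hi Hj. unfold Qf, Bf.
  eapply Rle_trans; [|apply (sumN_term _ _ i); auto].
  - apply (sumN_term _ (fun j => al i j * ((a i - a j) * (a i - a j)))); auto.
    intros. apply Rmult_le_pos; [apply Hn; auto| apply sqn].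
  - intros. apply sumN_nonneg; intros. apply Rmult_le_pos; [apply Hn; auto| apply sqn].
Qed.

Lemma row_le N al i : nneg N al -> (i < N)%nat -> sumN N (fun j => al i j) <= Atot N al.
Proof.
  intros Hn Hi. apply (sumN_term _ (fun i => sumN N (fun j => al i j))); auto.
  intros; apply sumN_nonneg; intros; apply Hn; auto.
Qed.

Lemma col_le N al j : nneg N al -> (j < N)%nat -> sumN N (fun i => al i j) <= Atot N al.
Proof.
  intros Hn Hj. unfold Atot. rewrite sumN_swap.
  apply (sumN_term _ (fun j => sumN N (fun i => al i j))); auto.
  intros; apply sumN_nonneg; intros; apply Hn; auto.
Qed.

Lemma Atot_nonneg N al : nneg N al -> 0 <= Atot N al.
Proof. intros Hn. apply sumN_nonneg; intros; apply sumN_nonneg; intros; apply Hn; auto. Qed.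

Lemma Qf_upper N al a m : nneg N al ->
  Qf N al a <= 4 * Atot N al * sumN N (fun i => (a i - m) * (a i - m)).
Proof.
  intros Hn. unfold Qf, Bf.
  apply Rle_trans with (sumN N (fun i => sumN N (fun j =>
     2 * ((a i - m) * (a i - m) * al i j) + 2 * ((a j - m) * (a j - m) * al i j)))).
  { apply sumN_le; intros i Hi; apply sumN_le; intros j Hj.
    assert (0 <= al i j) by (apply Hn; auto).
    pose proof (sqn ((a i - m) + (a j - m))).
    assert (Hq : (a i - a j)*(a i - a j) <= 2*((a i - m)*(a i - m)) + 2*((a j-m)*(a j-m))) by nra.
    apply Rmult_le_compat_l with (r := al i j) in Hq; auto. nra. }
  rewrite (sumN_ext _ _ (fun i => 2 * ((a i - m) * (a i - m) * sumN N (fun j => al i j))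
       + 2 * sumN N (fun j => (a j - m) * (a j - m) * al i j))).
  2:{ intros. rewrite sumN_plus, !sumN_scal. reflexivity. }
  rewrite sumN_plus, !sumN_scal.
  rewrite (sumN_swap N N (fun i j => (a j - m) * (a j - m) * al i j)).
  rewrite (sumN_ext _ (fun j => sumN N (fun i => (a j - m) * (a j - m) * al i j))
      (fun j => (a j - m) * (a j - m) * sumN N (fun i => al i j))).
  2:{ intros. rewrite sumN_scal. reflexivity. }
  assert (H1 : sumN N (fun i => (a i - m) * (a i - m) * sumN N (fun j => al i j))
     <= sumN N (fun i => (a i - m) * (a i - m) * Atot N al)).
  { apply sumN_le; intros. apply Rmult_le_compat_l; [apply sqn| apply row_le; auto]. }
  assert (H2 : sumN N (fun j => (a j - m) * (a j - m) * sumN N (fun i => al i j))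
     <= sumN N (fun i => (a i - m) * (a i - m) * Atot N al)).
  { apply sumN_le; intros. apply Rmult_le_compat_l; [apply sqn| apply col_le; auto]. }
  rewrite (sumN_ext _ (fun i => (a i - m) * (a i - m) * Atot N al) (fun i => Atot N al * ((a i - m) * (a i - m)))) in H1, H2 by (intros; ring).
  rewrite sumN_scal in H1, H2. lra.
Qed.

Lemma wcs n (w d : nat -> R) : (forall j, (j < n)%nat -> 0 <= w j) ->
  sumN n (fun j => w j * d j) * sumN n (fun j => w j * d j) <=
  sumN n w * sumN n (fun j => w j * (d j * d j)).
Proof.
  intros Hw. set (S := sumN n w). set (T := sumN n (fun j => w j * d j)).
  set (R0 := sumN n (fun j => w j * (d j * d j))).
  assert (HS : 0 <= S) by (apply sumN_nonneg; auto).
  destruct (Rle_lt_or_eq_dec _ _ HS) as [Hp|H0].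
  - set (k := T / S).
    assert (Hexp : sumN n (fun j => w j * ((d j - k) * (d j - k))) = R0 - 2 * k * T + k * k * S).
    { unfold R0, T, S. rewrite <- !sumN_scal, <- sumN_minus, <- sumN_plus. apply sumN_ext; intros; ring. }
    assert (0 <= sumN n (fun j => w j * ((d j - k) * (d j - k)))).
    { apply sumN_nonneg; intros. apply Rmult_le_pos; auto; apply sqn. }
    assert (HkS : k * S = T) by (unfold k; field; lra).
    assert (0 <= R0 - k * T) by (replace (R0 - k*T) with (R0 - 2 * k * T + k * (k * S)) by (rewrite HkS; ring); rewrite Rmult_assoc in Hexp; lra).
    assert (T * T = S * (k * T)) by (rewrite <- HkS; ring). nra.
  - assert (Hz : forall j, (j < n)%nat -> w j = 0).
    { intros j Hj. assert (w j <= S) by (apply sumN_term; auto). specialize (Hw j Hj). lra. }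
    assert (T = 0).
    { unfold T. rewrite (sumN_ext _ _ (fun _ => 0)); [rewrite sumN_const; ring|]. intros; rewrite Hz; auto; ring. }
    rewrite H. rewrite <- H0. lra.
Qed.

Lemma lapsq N al a : nneg N al ->
  sumN N (fun i => Lap N al a i * Lap N al a i) <= Atot N al * Qf N al a.
Proof.
  intros Hn. unfold Qf, Bf. rewrite <- sumN_scal. apply sumN_le; intros i Hi.
  unfold Lap. eapply Rle_trans.
  - apply (wcs N (fun j => al i j) (fun j => a i - a j)). intros; apply Hn; auto.
  - apply Rmult_le_compat_r.
    + apply sumN_nonneg; intros; apply Rmult_le_pos; [apply Hn; auto| apply sqn].
    + apply row_le; auto.
Qed.


Lemma unif n (P : nat -> R -> Prop) a0 :
  (forall k b c, P k b -> b <= c -> P k c) ->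
  (forall k, (k < n)%nat -> exists b, P k b) ->
  exists b, a0 <= b /\ forall k, (k < n)%nat -> P k b.
Proof.
  intros Hm. induction n; intros H.
  - exists a0. split; [lra| intros; lia].
  - destruct IHn as [b1 [Hb1 H1]]; [intros; apply H; lia|].
    destruct (H n) as [b2 H2]; [lia|].
    exists (Rmax b1 b2). split; [eapply Rle_trans; [apply Hb1| apply Rmax_l]|].
    intros k Hk. destruct (Nat.eq_dec k n) as [->|].
    + eapply Hm; [apply H2| apply Rmax_r].
    + eapply Hm; [apply H1; lia| apply Rmax_l].
Qed.

Lemma walk_bound N al i j : nneg N al -> walk N al i j ->
  exists C, 1 <= C /\ forall a, (a i - a j) * (a i - a j) <= C * Qf N al a.
Proof.
  intros Hn W. induction W as [i Hi| i k j Hi Hk Hal W IH].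
  - exists 1. split; [lra|]. intros a. pose proof (Qf_nonneg N al a Hn). nra.
  - destruct IH as [C [HC HCa]]. exists (2 / al i k + 2 * C + 1). split.
    + assert (0 < 2 / al i k) by (apply Rdiv_lt_0_compat; lra). lra.
    + intros a. pose proof (HCa a). pose proof (Qf_nonneg N al a Hn).
      pose proof (Qf_term N al a i k Hn Hi Hk).
      assert (Hik : (a i - a k) * (a i - a k) <= Qf N al a / al i k).
      { apply (Rmult_le_reg_l (al i k)); auto. field_simplify; [lra| lra]. }
      pose proof (sqn ((a i - a k) - (a k - a j))).
      assert ((a i - a j) * (a i - a j) <= 2 * ((a i - a k) * (a i - a k)) + 2 * ((a k - a j) * (a k - a j))) by nra.
      assert (Qf N al a / al i k = / al i k * Qf N al a) by (unfold Rdiv; ring).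
      unfold Rdiv in *. nra.
Qed.

Lemma path_const N al : nneg N al -> connected_graph N al ->
  exists C, 1 <= C /\ forall a i j, (i < N)%nat -> (j < N)%nat ->
     (a i - a j) * (a i - a j) <= C * Qf N al a.
Proof.
  intros Hn Hc.
  destruct (unif N (fun i C => forall j a, (j < N)%nat -> (a i - a j) * (a i - a j) <= C * Qf N al a) 1)
    as [C [HC H]].
  - intros k b c Hb Hbc j a Hj. eapply Rle_trans; [apply Hb; auto|].
    apply Rmult_le_compat_r; auto. apply Qf_nonneg; auto.
  - intros i Hi.
    destruct (unif N (fun j C => forall a, (a i - a j) * (a i - a j) <= C * Qf N al a) 1)
      as [C [HC H]].
    + intros k b c Hb Hbc a. eapply Rle_trans; [apply Hb; auto|].
      apply Rmult_le_compat_r; auto. apply Qf_nonneg; auto.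
    + intros j Hj. destruct (walk_bound N al i j Hn (Hc i j Hi Hj)) as [C [_ HC]]. exists C; auto.
    + exists C. intros; auto.
  - exists C. split; auto.
Qed.

Lemma young x y K : 0 < K -> x * y <= x * x / (4 * K) + K * (y * y).
Proof.
  intros HK. pose proof (sqn (x - 2 * K * y)).
  apply (Rmult_le_reg_l (4 * K)); [lra|].
  replace (4 * K * (x * x / (4 * K) + K * (y * y))) with (x * x + 4 * K * K * (y * y)) by (field; lra).
  nra.
Qed.

Lemma poincare N al C : (0 < N)%nat -> symm N al -> nneg N al -> 1 <= C ->
  (forall a i j, (i < N)%nat -> (j < N)%nat -> (a i - a j) * (a i - a j) <= C * Qf N al a) ->
  forall a, Qf N al a <= 4 * INR N * C * sumN N (fun i => Lap N al a i * Lap N al a i).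
Proof.
  intros HN Hs Hn HC HP a.
  assert (HNr : 0 < INR N) by (apply lt_0_INR; auto).
  set (K := INR N * C).
  assert (HK : 0 < K) by (unfold K; nra).
  assert (E : sumN N (fun i => (a i - a 0%nat) * Lap N al a i) = / 2 * Qf N al a).
  { rewrite (sumN_ext _ _ (fun i => a i * Lap N al a i - a 0%nat * Lap N al a i)) by (intros; ring).
    rewrite sumN_minus, sumN_scal, lap_sum0, lap_dot by auto. unfold Qf. ring. }
  assert (Hb : sumN N (fun i => (a i - a 0%nat) * Lap N al a i) <=
     sumN N (fun i => (a i - a 0%nat) * (a i - a 0%nat) / (4 * K) + K * (Lap N al a i * Lap N al a i))).
  { apply sumN_le; intros. apply young; auto. }
  rewrite sumN_plus, sumN_scal in Hb.
  assert (Hc : sumN N (fun i => (a i - a 0%nat) * (a i - a 0%nat) / (4 * K)) <= / (4 * K) * (INR N * (C * Qf N al a))).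
  { rewrite <- sumN_const, <- sumN_scal. apply sumN_le; intros.
    unfold Rdiv. rewrite Rmult_comm. apply Rmult_le_compat_l.
    - left; apply Rinv_0_lt_compat; lra.
    - apply HP; auto. }
  assert (Heq : / (4 * K) * (INR N * (C * Qf N al a)) = / 4 * Qf N al a) by (unfold K; field; lra).
  unfold K in *. lra.
Qed.

Lemma B_sat_lo N al s v : 0 < s -> nneg N al ->
  Qf N al (fun i => clamp s (v i)) <= Bf N al v (fun i => clamp s (v i)).
Proof.
  intros Hs Hn. apply sumN_le; intros i Hi; apply sumN_le; intros j Hj.
  apply Rmult_le_compat_l; [apply Hn; auto|]. apply clamp_lip1; auto.
Qed.

Lemma B_sat_hi N al s v : 0 < s -> nneg N al ->
  Bf N al v (fun i => clamp s (v i)) <= Qf N al v.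
Proof.
  intros Hs Hn. apply sumN_le; intros i Hi; apply sumN_le; intros j Hj.
  apply Rmult_le_compat_l; [apply Hn; auto|]. apply clamp_lip2; auto.
Qed.

Lemma argmax n (f : nat -> R) : (0 < n)%nat -> exists p, (p < n)%nat /\ forall i, (i < n)%nat -> f i <= f p.
Proof.
  induction n; intros Hn; [lia|].
  destruct n.
  - exists 0%nat. split; [lia|]. intros i Hi. replace i with 0%nat by lia. lra.
  - destruct IHn as [p [Hp H]]; [lia|].
    destruct (Rle_dec (f p) (f (S n))).
    + exists (S n). split; [lia|]. intros i Hi. destruct (Nat.eq_dec i (S n)) as [->|]; [lra|].
      specialize (H i ltac:(lia)). lra.
    + exists p. split; [lia|]. intros i Hi. destruct (Nat.eq_dec i (S n)) as [->|]; [lra|].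
      apply H; lia.
Qed.

Lemma dissip N al s v m M2 C kap : (0 < N)%nat -> 0 < s -> -s <= m <= s ->
  sumN N (fun i => v i - m) = 0 ->
  (forall i, (i < N)%nat -> (v i - m) * (v i - m) <= M2) ->
  (forall a i j, (i < N)%nat -> (j < N)%nat -> (a i - a j) * (a i - a j) <= C * Qf N al a) ->
  0 < kap -> kap <= / INR N -> kap * (2 * (1 + M2)) <= s ->
  kap * kap * sumN N (fun i => (v i - m) * (v i - m)) <= INR N * C * Qf N al (fun i => clamp s (v i)).
Proof.
  intros HN Hs Hm Hsum HM HP Hk Hk1 Hk2.
  assert (HNr : 0 < INR N) by (apply lt_0_INR; auto).
  destruct (argmax N v HN) as [p [Hp Hpm]].
  destruct (argmax N (fun i => - v i) HN) as [q [Hq Hqm]].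
  assert (Hqm' : forall i, (i < N)%nat -> v q <= v i) by (intros i Hi; specialize (Hqm i Hi); simpl in Hqm; lra).
  assert (S1 : sumN N (fun i => v i - m) <= INR N * (v p - m)).
  { rewrite <- sumN_const. apply sumN_le; intros i Hi. specialize (Hpm i Hi); lra. }
  assert (S2 : INR N * (v q - m) <= sumN N (fun i => v i - m)).
  { rewrite <- sumN_const. apply sumN_le; intros i Hi. specialize (Hqm' i Hi); lra. }
  assert (Hup : 0 <= v p - m) by nra.
  assert (Huq : v q - m <= 0) by nra.
  set (d := v p - v q).
  assert (D1 : d <= INR N * (m - v q)).
  { assert (sumN N (fun i => (v i - m) - (v q - m)) = - INR N * (v q - m)).
    { rewrite sumN_minus, sumN_const, Hsum. ring. }
    assert ((v p - m) - (v q - m) <= sumN N (fun i => (v i - m) - (v q - m))).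
    { apply (sumN_term N (fun i => (v i - m) - (v q - m)) p); auto. intros i Hi. specialize (Hqm' i Hi). lra. }
    simpl in *. unfold d. lra. }
  assert (D2 : d <= INR N * (v p - m)).
  { assert (sumN N (fun i => (v p - m) - (v i - m)) = INR N * (v p - m)).
    { rewrite sumN_minus, sumN_const, Hsum. ring. }
    assert ((v p - m) - (v q - m) <= sumN N (fun i => (v p - m) - (v i - m))).
    { apply (sumN_term N (fun i => (v p - m) - (v i - m)) q); auto. intros i Hi. specialize (Hpm i Hi). lra. }
    simpl in *. unfold d. lra. }
  assert (Hsq : sumN N (fun i => (v i - m) * (v i - m)) <= INR N * (d * d)).
  { rewrite <- sumN_const. apply sumN_le; intros i Hi.
    specialize (Hpm i Hi). specialize (Hqm' i Hi). unfold d. nra. }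
  assert (HM0 : 0 <= M2) by (specialize (HM p Hp); pose proof (sqn (v p - m)); lra).
  assert (Bp : v p - m <= 1 + M2).
  { specialize (HM p Hp). destruct (Rle_dec (v p - m) (1 + M2)); auto. nra. }
  assert (Bq : m - v q <= 1 + M2).
  { specialize (HM q Hq). destruct (Rle_dec (m - v q) (1 + M2)); auto. nra. }
  assert (Hd0 : 0 <= d) by (unfold d; lra).
  assert (Hkd : kap * d <= s) by (unfold d in *; nra).
  assert (Hkd2 : kap * d * INR N <= d).
  { apply Rle_trans with (/ INR N * d * INR N); [apply Rmult_le_compat_r; [lra| apply Rmult_le_compat_r; lra]|].
    right; field; lra. }
  set (g := clamp s (v p) - clamp s (v q)).
  assert (Hg : kap * d <= g).
  { unfold g. destruct (Rle_dec m 0).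
    - assert (clamp s (v q) <= m).
      { assert (Hc := clamp_mono s (v q) m Hs ltac:(lra)).
        replace (clamp s m) with m in Hc by (unfold clamp, Rmin, Rmax; repeat destruct Rle_dec; lra). lra. }
      destruct (Rle_dec (v p) s).
      + replace (clamp s (v p)) with (v p) by (unfold clamp, Rmin, Rmax; repeat destruct Rle_dec; lra).
        nra.
      + rewrite clamp_hi by lra. lra.
    - assert (m <= clamp s (v p)).
      { assert (Hc := clamp_mono s m (v p) Hs ltac:(lra)).
        replace (clamp s m) with m in Hc by (unfold clamp, Rmin, Rmax; repeat destruct Rle_dec; lra). lra. }
      destruct (Rle_dec (-s) (v q)).
      + replace (clamp s (v q)) with (v q) by (unfold clamp, Rmin, Rmax; repeat destruct Rle_dec; lra).
        nra.
      + rewrite (clamp_lo s (v q)) by lra. lra. }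
  assert (Hg2 : g * g <= C * Qf N al (fun i => clamp s (v i))).
  { unfold g. apply (HP (fun i => clamp s (v i))); auto. }
  assert (Hkd0 : 0 <= kap * d) by nra.
  assert (kap * d * (kap * d) <= g * g) by nra.
  assert (kap * kap * sumN N (fun i => (v i - m) * (v i - m)) <= kap * kap * (INR N * (d * d))).
  { apply Rmult_le_compat_l; auto. nra. }
  nra.
Qed.


Record Sys (N : nat) (al : nat -> nat -> R) (s t0 : R) (x v : nat -> R -> R) : Prop := mkSys {
  sy_sym : symm N al; sy_nn : nneg N al; sy_s : 0 < s;
  sy_x : forall i t, (i < N)%nat -> t0 <= t -> derivable_pt_lim (x i) t (v i t);
  sy_v : forall i t, (i < N)%nat -> t0 <= t ->
          derivable_pt_lim (v i) t
            (sumN N (fun j => al i j * ((x j t - x i t) + (sat s (v j t) - sat s (v i t)))))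
}.

Definition Fd N al s (x v : nat -> R -> R) i t :=
  sumN N (fun j => al i j * ((x j t - x i t) + (sat s (v j t) - sat s (v i t)))).

Lemma F_eq N al s x v i t : 0 < s ->
  Fd N al s x v i t = - Lap N al (fun k => x k t) i - Lap N al (fun k => clamp s (v k t)) i.
Proof.
  intros Hs. unfold Fd, Lap.
  rewrite (sumN_ext _ _ (fun j => -1 * (al i j * (x i t - x j t)) - al i j * (clamp s (v i t) - clamp s (v j t)))).
  - rewrite sumN_minus, sumN_scal. ring.
  - intros. rewrite !sat_clamp by auto. ring.
Qed.

Lemma dpl_sqd f g a b t : derivable_pt_lim f t a -> derivable_pt_lim g t b ->
  derivable_pt_lim (fun t => (f t - g t) * (f t - g t)) t (2 * (f t - g t) * (a - b)).
Proof.
  intros Ha Hb. eapply dpl_val; [|apply (dpl_mult (fun t => f t - g t) (fun t => f t - g t)); apply dpl_minus; eauto].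
  simpl. ring.
Qed.

Lemma sum_F_zero N al s x v t : 0 < s -> symm N al -> sumN N (fun i => Fd N al s x v i t) = 0.
Proof.
  intros Hs Hsy. rewrite (sumN_ext _ _ (fun i => -1 * Lap N al (fun k => x k t) i - Lap N al (fun k => clamp s (v k t)) i)).
  - rewrite sumN_minus, sumN_scal, !lap_sum0 by auto. ring.
  - intros. rewrite F_eq by auto. ring.
Qed.

Definition vsum N (v : nat -> R -> R) t := sumN N (fun i => v i t).

Lemma vsum_const N al s t0 x v : Sys N al s t0 x v -> forall t, t0 <= t -> vsum N v t = vsum N v t0.
Proof.
  intros S t Ht.
  assert (D : forall t, t0 <= t -> derivable_pt_lim (vsum N v) t 0).
  { intros u Hu. unfold vsum. eapply dpl_val; [|apply (dpl_sumN N v (fun i => Fd N al s x v i u))].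
    - apply sum_F_zero; [apply (sy_s _ _ _ _ _ _ S)| apply (sy_sym _ _ _ _ _ _ S)].
    - intros i Hi. apply (sy_v _ _ _ _ _ _ S); auto. }
  assert (H1 := nonincr (vsum N v) (fun _ => 0) t0 D (fun _ _ => Rle_refl 0) t0 t (Rle_refl _) Ht).
  assert (D' : forall t, t0 <= t -> derivable_pt_lim (fun u => -1 * vsum N v u) t (-1 * 0)).
  { intros u Hu. apply (dpl_scal (-1)); apply D; auto. }
  assert (H2 := nonincr (fun u => -1 * vsum N v u) (fun _ => -1 * 0) t0 D' (fun _ _ => ltac:(lra)) t0 t (Rle_refl _) Ht).
  simpl in H2. lra.
Qed.

Definition Wf N al (x v : nat -> R -> R) m t :=
  / 4 * Qf N al (fun i => x i t) + / 2 * sumN N (fun i => (v i t - m) * (v i t - m)).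

Lemma D_W N al s t0 x v m : Sys N al s t0 x v -> forall t, t0 <= t ->
  derivable_pt_lim (Wf N al x v m) t (- / 2 * Bf N al (fun i => v i t) (fun i => clamp s (v i t))).
Proof.
  intros S t Ht. destruct S as [Hsy Hnn Hs Hx Hv].
  assert (h1 : derivable_pt_lim (fun t => Qf N al (fun i => x i t)) t
     (sumN N (fun i => sumN N (fun j => al i j * (2 * (x i t - x j t) * (v i t - v j t)))))).
  { apply (dpl_sumN N (fun i t => sumN N (fun j => al i j * ((x i t - x j t) * (x i t - x j t))))).
    intros i Hi. apply (dpl_sumN N (fun j t => al i j * ((x i t - x j t) * (x i t - x j t)))).
    intros j Hj. apply dpl_scal. apply dpl_sqd; auto. }
  assert (h2 : derivable_pt_lim (fun t => sumN N (fun i => (v i t - m) * (v i t - m))) t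
     (sumN N (fun i => 2 * (v i t - m) * (Fd N al s x v i t - 0)))).
  { apply (dpl_sumN N (fun i t => (v i t - m) * (v i t - m))).
    intros i Hi. apply (dpl_sqd (v i) (fun _ => m)); [apply Hv; auto| apply dpl_const]. }
  eapply dpl_val; [|apply dpl_plus; [apply dpl_scal; exact h1| apply dpl_scal; exact h2]].
  rewrite (sumN_ext _ (fun i => 2 * (v i t - m) * (Fd N al s x v i t - 0))
    (fun i => (-2) * ((fun k => v k t - m) i * Lap N al (fun k => x k t) i) + (-2) * ((fun k => v k t - m) i * Lap N al (fun k => clamp s (v k t)) i))).
  2:{ intros. rewrite F_eq by auto. simpl. ring. }
  rewrite sumN_plus, !sumN_scal, !lap_dot by auto.
  rewrite !Bf_shift.
  assert (E : sumN N (fun i => sumN N (fun j => al i j * (2 * (x i t - x j t) * (v i t - v j t))))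
     = 2 * Bf N al (fun k => x k t) (fun k => v k t)).
  { unfold Bf. rewrite <- sumN_scal. apply sumN_ext; intros. rewrite <- sumN_scal. apply sumN_ext; intros. ring. }
  rewrite E, (Bf_comm N al (fun k => x k t)). set (b1 := Bf N al (fun k => v k t) (fun k => x k t)). set (b2 := Bf N al (fun i => v i t) (fun i => clamp s (v i t))). lra.
Qed.

Definition Pf N al (x v : nat -> R -> R) m t :=
  sumN N (fun i => (v i t - m) * Lap N al (fun k => x k t) i).

Lemma D_P N al s t0 x v m : Sys N al s t0 x v -> forall t, t0 <= t ->
  derivable_pt_lim (Pf N al x v m) t
   (sumN N (fun i => Fd N al s x v i t * Lap N al (fun k => x k t) i
        + (v i t - m) * Lap N al (fun k => v k t) i)).
Proof.
  intros S t Ht. destruct S as [Hsy Hnn Hs Hx Hv].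
  apply (dpl_sumN N (fun i t => (v i t - m) * Lap N al (fun k => x k t) i)).
  intros i Hi.
  eapply dpl_val. 2: apply (dpl_mult (fun t => v i t - m) (fun t => Lap N al (fun k => x k t) i) t
      (Fd N al s x v i t - 0) (Lap N al (fun k => v k t) i)).
  - simpl. ring.
  - apply (dpl_minus (v i) (fun _ => m)); [apply Hv; auto| apply dpl_const].
  - unfold Lap. apply (dpl_sumN N (fun j t => al i j * (x i t - x j t))).
    intros j Hj. apply (dpl_scal (al i j) (fun t => x i t - x j t)). apply dpl_minus; auto.
Qed.


Lemma Pd_bound N al s x v m t : 0 < s -> symm N al ->
  sumN N (fun i => Fd N al s x v i t * Lap N al (fun k => x k t) i
        + (v i t - m) * Lap N al (fun k => v k t) i)
  <= - / 2 * sumN N (fun i => Lap N al (fun k => x k t) i * Lap N al (fun k => x k t) i)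
     + / 2 * sumN N (fun i => Lap N al (fun k => clamp s (v k t)) i * Lap N al (fun k => clamp s (v k t)) i)
     + / 2 * Qf N al (fun k => v k t).
Proof.
  intros Hs Hsy. rewrite sumN_plus.
  rewrite (lap_dot N al (fun k => v k t - m)) by auto. rewrite Bf_shift.
  assert (sumN N (fun i => Fd N al s x v i t * Lap N al (fun k => x k t) i) <=
     sumN N (fun i => - / 2 * (Lap N al (fun k => x k t) i * Lap N al (fun k => x k t) i)
       + / 2 * (Lap N al (fun k => clamp s (v k t)) i * Lap N al (fun k => clamp s (v k t)) i))).
  { apply sumN_le; intros i Hi. rewrite F_eq by auto.
    pose proof (sqn (Lap N al (fun k => x k t) i + Lap N al (fun k => clamp s (v k t)) i)). nra. }
  rewrite sumN_plus, !sumN_scal in H. unfold Qf. lra.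
Qed.

Lemma P_abs N al x v m t :
  Rabs (Pf N al x v m t) <= / 2 * sumN N (fun i => (v i t - m) * (v i t - m))
    + / 2 * sumN N (fun i => Lap N al (fun k => x k t) i * Lap N al (fun k => x k t) i).
Proof.
  unfold Pf. rewrite <- !sumN_scal, <- sumN_plus. apply Rabs_le. split.
  - match goal with |- - sumN N ?F <= _ => assert (Hs : sumN N (fun i => -1 * F i) <= sumN N (fun i => (v i t - m) * Lap N al (fun k => x k t) i)) end.
    { apply sumN_le; intros i Hi.
      pose proof (sqn ((v i t - m) + Lap N al (fun k => x k t) i)). nra. }
    rewrite sumN_scal in Hs. lra.
  - apply sumN_le; intros i Hi.
    pose proof (sqn ((v i t - m) - Lap N al (fun k => x k t) i)). nra.
Qed.

Lemma tend_bound (f : R -> R) T0 B lam : 0 <= B -> 0 < lam ->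
  (forall t, T0 <= t -> f t * f t <= B / (1 + lam * (t - T0))) -> tends_to_0_at_infty f.
Proof.
  intros HB Hl H eps He. exists (T0 + B / (lam * (eps * eps))).
  intros t Ht.
  assert (He2 : 0 < eps * eps) by nra.
  assert (Hq : 0 <= B / (lam * (eps * eps))) by (apply Rmult_le_pos; [lra| left; apply Rinv_0_lt_compat; nra]).
  assert (Hd : 0 < 1 + lam * (t - T0)) by nra.
  assert (Hlt : B < eps * eps * (1 + lam * (t - T0))).
  { assert (lam * (eps * eps) * (B / (lam * (eps * eps))) = B) by (field; nra).
    assert (lam * (eps * eps) * (B / (lam * (eps * eps))) <= lam * (eps * eps) * (t - T0)) by (apply Rmult_le_compat_l; [nra|lra]). nra. }
  assert (Hf : f t * f t < eps * eps).
  { eapply Rle_lt_trans; [apply H; lra|]. apply (Rmult_lt_reg_r (1 + lam * (t - T0))); auto.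
    unfold Rdiv. rewrite Rmult_assoc, Rinv_l by lra. lra. }
  destruct (Rle_dec eps (Rabs (f t))); [|lra].
  exfalso. assert (eps * eps <= Rabs (f t) * Rabs (f t)) by nra.
  rewrite <- Rabs_mult, Rabs_right in H0 by (apply Rle_ge, sqn). lra.
Qed.

Lemma exp_bound y : 0 <= y -> / exp y <= / (1 + y).
Proof.
  intros Hy. apply Rinv_le_contravar; [lra|].
  destruct (Req_dec y 0) as [->|Hn]; [rewrite exp_0; lra| left; apply exp_ineq1; auto].
Qed.

Lemma inv_le1 D D' : 0 < D -> D' <= D -> / D * D' <= 1.
Proof. intros HD HD'. apply (Rmult_le_reg_l D); auto. rewrite <- Rmult_assoc, Rinv_r by lra. lra. Qed.


Lemma dpl_expl lam t : derivable_pt_lim (fun u => exp (lam * u)) t (lam * exp (lam * t)).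
Proof.
  apply (dpl_ext (comp exp (fun u => lam * u))); [intros; reflexivity|].
  eapply dpl_val; [|apply derivable_pt_lim_comp; [apply (dpl_scal lam (fun u => u)); apply derivable_pt_lim_id| apply derivable_pt_lim_exp]].
  ring.
Qed.

Lemma W_nonincr N al s t0 x v m : Sys N al s t0 x v ->
  forall t1 t2, t0 <= t1 -> t1 <= t2 -> Wf N al x v m t2 <= Wf N al x v m t1.
Proof.
  intros S. apply (nonincr _ (fun t => - / 2 * Bf N al (fun i => v i t) (fun i => clamp s (v i t))) t0).
  - intros; apply (D_W N al s t0); auto.
  - intros t Ht. pose proof (B_sat_lo N al s (fun i => v i t) (sy_s _ _ _ _ _ _ S) (sy_nn _ _ _ _ _ _ S)).
    pose proof (Qf_nonneg N al (fun i => clamp s (v i t)) (sy_nn _ _ _ _ _ _ S)). lra.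
Qed.

Lemma W_parts N al (x v : nat -> R -> R) m t : nneg N al ->
  0 <= Qf N al (fun i => x i t) /\ 0 <= sumN N (fun i => (v i t - m) * (v i t - m)).
Proof. intros Hn. split; [apply Qf_nonneg; auto| apply sumN_nonneg; intros; apply sqn]. Qed.

Lemma conv_if N al s t0 x v m : Sys N al s t0 x v -> (0 < N)%nat -> connected_graph N al ->
  -s <= m <= s -> vsum N v t0 = INR N * m ->
  forall i j, (i < N)%nat -> (j < N)%nat ->
   tends_to_0_at_infty (fun t => x i t - x j t) /\ tends_to_0_at_infty (fun t => v i t - v j t).
Proof.
  intros S HN Hconn Hm Hv0 i0 j0 Hi0 Hj0.
  pose proof S as S'. destruct S' as [Hsy Hnn Hs Hx Hv].
  assert (HNr : 0 < INR N) by (apply lt_0_INR; auto).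
  destruct (path_const N al Hnn Hconn) as [C [HC HP]].
  set (A := Atot N al). assert (HA : 0 <= A) by (apply Atot_nonneg; auto).
  set (W := Wf N al x v m).
  set (c2 := fun t => sumN N (fun i => (v i t - m) * (v i t - m))).
  set (Qx := fun t => Qf N al (fun i => x i t)).
  assert (HW : forall t, W t = / 4 * Qx t + / 2 * c2 t) by reflexivity.
  assert (Hpos : forall t, 0 <= Qx t /\ 0 <= c2 t) by (intros; apply W_parts; auto).
  assert (Hsum : forall t, t0 <= t -> sumN N (fun i => v i t - m) = 0).
  { intros t Ht. rewrite sumN_minus, sumN_const. pose proof (vsum_const N al s t0 x v S t Ht).
    unfold vsum in *. lra. }
  assert (HWle : forall t, t0 <= t -> W t <= W t0).
  { intros t Ht. apply (W_nonincr N al s t0 x v m S); lra. }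
  set (M2 := 2 * W t0).
  assert (Hci : forall t i, t0 <= t -> (i < N)%nat -> (v i t - m) * (v i t - m) <= M2).
  { intros t i Ht Hi. assert ((v i t - m) * (v i t - m) <= c2 t).
    { apply (sumN_term N (fun i => (v i t - m) * (v i t - m))); auto; intros; apply sqn. }
    pose proof (HWle t Ht) as Hw. destruct (Hpos t). rewrite (HW t), (HW t0) in Hw. unfold M2. rewrite HW. lra. }
  assert (HM2 : 0 <= M2) by (unfold M2; rewrite HW; destruct (Hpos t0); lra).
  set (kap := Rmin (/ INR N) (s / (2 * (1 + M2)))).
  assert (Hk : 0 < kap) by (apply Rmin_pos; [apply Rinv_0_lt_compat; lra| apply Rdiv_lt_0_compat; lra]).
  assert (Hk1 : kap <= / INR N) by apply Rmin_l.
  assert (Hk2 : kap * (2 * (1 + M2)) <= s).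
  { apply Rle_trans with (s / (2 * (1 + M2)) * (2 * (1 + M2))).
    - apply Rmult_le_compat_r; [lra| apply Rmin_r].
    - right; field; lra. }
  set (Kd := INR N * C / (kap * kap)).
  assert (HKd : 0 < Kd) by (unfold Kd; apply Rdiv_lt_0_compat; nra).
  assert (Hdis : forall t, t0 <= t -> c2 t <= Kd * Qf N al (fun i => clamp s (v i t))).
  { intros t Ht. pose proof (dissip N al s (fun i => v i t) m M2 C kap HN Hs Hm (Hsum t Ht)
       (fun i Hi => Hci t i Ht Hi) HP Hk Hk1 Hk2) as Hd.
    unfold c2, Kd. apply (Rmult_le_reg_l (kap * kap)); [nra|].
    replace (kap * kap * (INR N * C / (kap * kap) * Qf N al (fun i => clamp s (v i t))))
      with (INR N * C * Qf N al (fun i => clamp s (v i t))) by (field; lra). exact Hd. }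
  set (K := 1 + A + Kd + 4 * INR N * C).
  assert (HK : 1 <= K) by (unfold K; nra).
  set (eps := / (10 * (K * K))).
  assert (He : 0 < eps) by (unfold eps; apply Rinv_0_lt_compat; nra).
  assert (HeKK : eps * K * K = / 10) by (unfold eps; field; lra).
  assert (HeK : eps * K <= / 10).
  { assert (eps * K * 1 <= eps * K * K) by (apply Rmult_le_compat_l; nra). lra. }
  assert (He2 : eps <= / 10) by (assert (eps * 1 <= eps * K) by (apply Rmult_le_compat_l; lra); lra).
  set (U := fun t => W t + eps * Pf N al x v m t).
  set (k := eps / K).
  assert (Hkk : 0 < k) by (unfold k; apply Rdiv_lt_0_compat; lra).
  assert (HUW : forall t, t0 <= t -> / 2 * W t <= U t <= 3 / 2 * W t).
  { intros t Ht. pose proof (P_abs N al x v m t) as Hab.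
    pose proof (lapsq N al (fun k => x k t) Hnn) as Hl.
    fold A in Hl. fold (Qx t) in Hl. fold (c2 t) in Hab.
    set (Lx := sumN N (fun i => Lap N al (fun k => x k t) i * Lap N al (fun k => x k t) i)) in *.
    destruct (Hpos t) as [HQ Hc].
    assert (A * Qx t <= K * Qx t) by (apply Rmult_le_compat_r; [lra| unfold K; nra]).
    assert (Habs : Rabs (eps * Pf N al x v m t) <= eps * (/ 2 * c2 t + / 2 * (K * Qx t))).
    { rewrite Rabs_mult, Rabs_right by lra. apply Rmult_le_compat_l; lra. }
    assert (eps * K * Qx t <= / 10 * Qx t) by (apply Rmult_le_compat_r; lra).
    assert (eps * c2 t <= / 10 * c2 t) by (apply Rmult_le_compat_r; lra).
    pose proof (Rle_abs (eps * Pf N al x v m t)). pose proof (Rle_abs (- (eps * Pf N al x v m t))) as Hab2. rewrite Rabs_Ropp in Hab2. unfold U. rewrite HW. lra. }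
  set (Ud := fun t => - / 2 * Bf N al (fun i => v i t) (fun i => clamp s (v i t)) + eps *
      sumN N (fun i => Fd N al s x v i t * Lap N al (fun k => x k t) i + (v i t - m) * Lap N al (fun k => v k t) i)).
  assert (HdU : forall t, t0 <= t -> derivable_pt_lim U t (Ud t) /\ Ud t <= - k * W t).
  { intros t Ht. unfold Ud. split.
    - apply dpl_plus; [apply (D_W N al s t0 x v m S t Ht)| apply dpl_scal; apply (D_P N al s t0 x v m S t Ht)].
    - pose proof (Pd_bound N al s x v m t Hs Hsy) as HPd.
      set (Pd := sumN N (fun i => Fd N al s x v i t * Lap N al (fun k => x k t) i + (v i t - m) * Lap N al (fun k => v k t) i)) in *.
      set (Lx := sumN N (fun i => Lap N al (fun k => x k t) i * Lap N al (fun k => x k t) i)) in *.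
      set (LY := sumN N (fun i => Lap N al (fun k => clamp s (v k t)) i * Lap N al (fun k => clamp s (v k t)) i)) in *.
      set (a1 := Qf N al (fun i => clamp s (v i t))).
      set (Bd := Bf N al (fun i => v i t) (fun i => clamp s (v i t))).
      assert (h6 : a1 <= Bd) by (apply B_sat_lo; auto).
      assert (ha1 : 0 <= a1) by (apply Qf_nonneg; auto).
      assert (f1 : c2 t <= K * a1).
      { pose proof (Hdis t Ht). assert (Kd * a1 <= K * a1) by (apply Rmult_le_compat_r; [lra| unfold K; nra]). fold a1 in H. lra. }
      assert (f2 : LY <= K * a1).
      { pose proof (lapsq N al (fun k => clamp s (v k t)) Hnn). fold A a1 in H.
        assert (A * a1 <= K * a1) by (apply Rmult_le_compat_r; [lra| unfold K; nra]). unfold LY. lra. }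
      assert (f3 : Qf N al (fun k => v k t) <= 4 * K * c2 t).
      { pose proof (Qf_upper N al (fun k => v k t) m Hnn). cbv beta in H. fold A in H. fold (c2 t) in H.
        destruct (Hpos t). assert (A * c2 t <= K * c2 t) by (apply Rmult_le_compat_r; [lra| unfold K; nra]). lra. }
      assert (f4 : Qx t <= K * Lx).
      { pose proof (poincare N al C HN Hsy Hnn HC HP (fun k => x k t)). fold Lx in H. fold (Qx t) in H.
        assert (0 <= Lx) by (apply sumN_nonneg; intros; apply sqn).
        assert (4 * INR N * C * Lx <= K * Lx) by (apply Rmult_le_compat_r; [lra| unfold K; nra]). lra. }
      assert (g1 : eps * Pd <= eps * (- / 2 * Lx + / 2 * LY + / 2 * Qf N al (fun k => v k t)))
        by (apply Rmult_le_compat_l; lra).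
      assert (g2 : eps * LY <= eps * (K * a1)) by (apply Rmult_le_compat_l; lra).
      assert (g3 : eps * Qf N al (fun k => v k t) <= eps * (4 * K * c2 t)) by (apply Rmult_le_compat_l; lra).
      assert (g4 : eps * K * c2 t <= eps * K * (K * a1)) by (apply Rmult_le_compat_l; nra).
      assert (g5 : eps * K * (K * a1) = / 10 * a1) by (rewrite <- Rmult_assoc, HeKK; ring).
      assert (g6 : eps * K * a1 <= / 10 * a1) by (apply Rmult_le_compat_r; lra).
      assert (g7 : eps / K * c2 t <= eps / K * (K * a1)) by (apply Rmult_le_compat_l; [unfold Rdiv; apply Rmult_le_pos; [lra| left; apply Rinv_0_lt_compat; lra]| lra]).
      assert (g8 : eps / K * (K * a1) = eps * a1) by (field; lra).
      assert (g9 : eps * a1 <= / 10 * a1) by (apply Rmult_le_compat_r; lra).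
      assert (g10 : eps / K * Qx t <= eps / K * (K * Lx)) by (apply Rmult_le_compat_l; [unfold Rdiv; apply Rmult_le_pos; [lra| left; apply Rinv_0_lt_compat; lra]| lra]).
      assert (g11 : eps / K * (K * Lx) = eps * Lx) by (field; lra).
      rewrite HW. unfold k. assert (0 <= Lx) by (apply sumN_nonneg; intros; apply sqn). assert (0 <= eps * Lx) by nra. lra. }
  set (lam := 2 * k / 3).
  assert (Hlam : 0 < lam) by (unfold lam; lra).
  set (G := fun t => U t * exp (lam * t)).
  assert (HG : forall t, t0 <= t -> G t <= G t0).
  { intros t Ht.
    apply (nonincr G (fun u => Ud u * exp (lam * u) + U u * (lam * exp (lam * u))) t0); try lra.
    - intros u Hu. destruct (HdU u Hu) as [Hd1 Hd2].
      apply (dpl_mult U (fun u => exp (lam * u))); auto. apply dpl_expl.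
    - intros u Hu. destruct (HdU u Hu) as [Hd1 Hd2].
      pose proof (exp_pos (lam * u)). destruct (HUW u Hu).
      assert (Ud u + lam * U u <= 0).
      { assert (lam * U u <= lam * (3 / 2 * W u)) by (apply Rmult_le_compat_l; lra).
        unfold lam in *. lra. }
      nra. }
  set (U0 := U t0).
  assert (HU0 : 0 <= U0) by (unfold U0; destruct (HUW t0 (Rle_refl _)); rewrite HW in *; destruct (Hpos t0); lra).
  assert (HUt : forall t, t0 <= t -> U t <= U0 / (1 + lam * (t - t0))).
  { intros t Ht. pose proof (HG t Ht) as Hg. unfold G in Hg. fold U0 in Hg.
    assert (Hexp : exp (lam * t) = exp (lam * t0) * exp (lam * (t - t0))).
    { rewrite <- exp_plus. f_equal. ring. }
    pose proof (exp_pos (lam * t0)). pose proof (exp_pos (lam * (t - t0))).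
    assert (Hy : 0 <= lam * (t - t0)) by nra.
    pose proof (exp_bound _ Hy) as Heb.
    assert (U t * exp (lam * (t - t0)) <= U0) by (rewrite Hexp in Hg; nra).
    assert (U t <= U0 * / exp (lam * (t - t0))).
    { apply (Rmult_le_reg_r (exp (lam * (t - t0)))); auto. rewrite Rmult_assoc, Rinv_l by lra. lra. }
    unfold Rdiv. assert (U0 * / exp (lam * (t - t0)) <= U0 * / (1 + lam * (t - t0))) by (apply Rmult_le_compat_l; auto).
    lra. }
  assert (HWU : forall t, t0 <= t -> W t <= 2 * (U0 / (1 + lam * (t - t0)))).
  { intros t Ht. destruct (HUW t Ht). pose proof (HUt t Ht). lra. }
  split.
  - apply (tend_bound _ t0 (8 * C * U0) lam); [nra| auto|].
    intros t Ht. pose proof (HP (fun k => x k t) i0 j0 Hi0 Hj0) as Hx0. fold (Qx t) in Hx0.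
    pose proof (HWU t Ht). rewrite HW in H. destruct (Hpos t).
    assert (C * Qx t <= C * (8 * (U0 / (1 + lam * (t - t0))))) by (apply Rmult_le_compat_l; lra).
    unfold Rdiv in *. lra.
  - apply (tend_bound _ t0 (16 * U0) lam); [nra| auto|].
    intros t Ht.
    assert ((v i0 t - m) * (v i0 t - m) <= c2 t).
    { apply (sumN_term N (fun i => (v i t - m) * (v i t - m))); auto; intros; apply sqn. }
    assert ((v j0 t - m) * (v j0 t - m) <= c2 t).
    { apply (sumN_term N (fun i => (v i t - m) * (v i t - m))); auto; intros; apply sqn. }
    pose proof (sqn ((v i0 t - m) + (v j0 t - m))).
    pose proof (HWU t Ht). rewrite HW in H2. destruct (Hpos t).
    unfold Rdiv in *. nra.
Qed.


Lemma unif_conv N (x v : nat -> R -> R) t0 :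
  (forall i j, (i < N)%nat -> (j < N)%nat ->
     tends_to_0_at_infty (fun t => x i t - x j t) /\ tends_to_0_at_infty (fun t => v i t - v j t)) ->
  forall rho, 0 < rho -> exists T, t0 <= T /\ forall t, T <= t -> forall i j, (i < N)%nat -> (j < N)%nat ->
     Rabs (x i t - x j t) < rho /\ Rabs (v i t - v j t) < rho.
Proof.
  intros H rho Hr.
  assert (Hex : forall i, (i < N)%nat -> exists T, forall t, T <= t -> forall j, (j < N)%nat ->
     Rabs (x i t - x j t) < rho /\ Rabs (v i t - v j t) < rho).
  { intros i Hi.
    assert (Hex2 : forall j, (j < N)%nat -> exists T, forall t, T <= t ->
        Rabs (x i t - x j t) < rho /\ Rabs (v i t - v j t) < rho).
    { intros j Hj. destruct (H i j Hi Hj) as [H1 H2].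
      destruct (H1 rho Hr) as [T1 HT1]. destruct (H2 rho Hr) as [T2 HT2].
      exists (Rmax T1 T2). intros t Ht. pose proof (Rmax_l T1 T2). pose proof (Rmax_r T1 T2).
      split; [apply HT1| apply HT2]; lra. }
    destruct (unif N (fun j T => forall t, T <= t ->
        Rabs (x i t - x j t) < rho /\ Rabs (v i t - v j t) < rho) t0) as [T [HT HTa]].
    + intros k b c Hb Hbc t Ht. apply Hb. lra.
    + exact Hex2.
    + exists T. intros t Ht j Hj. apply HTa; auto. }
  destruct (unif N (fun i T => forall t, T <= t -> forall j, (j < N)%nat ->
     Rabs (x i t - x j t) < rho /\ Rabs (v i t - v j t) < rho) t0) as [T [HT HTa]].
  - intros k b c Hb Hbc t Ht. apply Hb. lra.
  - exact Hex.
  - exists T. split; [auto|]. intros t Ht i j Hi Hj. apply HTa; auto.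
Qed.

Lemma Rabs_le_inv a b : Rabs a <= b -> - b <= a /\ a <= b.
Proof. intros H. pose proof (Rle_abs a). pose proof (Rle_abs (- a)). rewrite Rabs_Ropp in *. lra. Qed.

Lemma avg_close N (v : nat -> R -> R) m t rho : (0 < N)%nat -> sumN N (fun j => v j t) = INR N * m ->
  (forall i j, (i < N)%nat -> (j < N)%nat -> Rabs (v i t - v j t) <= rho) ->
  forall i, (i < N)%nat -> Rabs (v i t - m) <= rho.
Proof.
  intros HN Hs H i Hi.
  assert (HNr : 0 < INR N) by (apply lt_0_INR; auto).
  assert (E : sumN N (fun j => v i t - v j t) = INR N * (v i t - m)).
  { rewrite sumN_minus, sumN_const, Hs. ring. }
  assert (H1 : sumN N (fun j => v i t - v j t) <= sumN N (fun _ => rho)).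
  { apply sumN_le; intros j Hj. specialize (H i j Hi Hj). apply Rabs_le_inv in H. lra. }
  assert (H2 : sumN N (fun _ => - rho) <= sumN N (fun j => v i t - v j t)).
  { apply sumN_le; intros j Hj. specialize (H i j Hi Hj). apply Rabs_le_inv in H. lra. }
  rewrite !sumN_const in *. apply Rabs_le. split; nra.
Qed.

Lemma sq_zero a : a * a <= 0 -> a = 0.
Proof. intros H. pose proof (sqn a). assert (a * a = 0) by lra. apply Rmult_integral in H1. tauto. Qed.

Lemma conv_onlyif N al s t0 x v : Sys N al s t0 x v -> (0 < N)%nat -> connected_graph N al ->
  ~ (forall i j, (i < N)%nat -> (j < N)%nat -> x i t0 = x j t0 /\ v i t0 = v j t0) ->
  (forall i j, (i < N)%nat -> (j < N)%nat ->
     tends_to_0_at_infty (fun t => x i t - x j t) /\ tends_to_0_at_infty (fun t => v i t - v j t)) ->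
  - s <= / INR N * vsum N v t0 <= s.
Proof.
  intros S HN Hconn Hnc Hconv.
  pose proof S as S'. destruct S' as [Hsy Hnn Hs Hx Hv].
  assert (HNr : 0 < INR N) by (apply lt_0_INR; auto).
  set (m := / INR N * vsum N v t0).
  assert (Hsumt : forall t, t0 <= t -> sumN N (fun j => v j t) = INR N * m).
  { intros t Ht. pose proof (vsum_const N al s t0 x v S t Ht). unfold vsum in *. unfold m. rewrite H. field. lra. }
  destruct (path_const N al Hnn Hconn) as [C [HC HP]].
  set (A := Atot N al). assert (HA : 0 <= A) by (apply Atot_nonneg; auto).
  set (W := Wf N al x v m).
  set (c2 := fun t => sumN N (fun i => (v i t - m) * (v i t - m))).
  set (Qx := fun t => Qf N al (fun i => x i t)).
  assert (HW : forall t, W t = / 4 * Qx t + / 2 * c2 t) by reflexivity.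
  assert (Hpos : forall t, 0 <= Qx t /\ 0 <= c2 t) by (intros; apply W_parts; auto).
  assert (Hcase : s < m \/ m < - s -> False).
  2:{ destruct (Rle_dec (- s) m); destruct (Rle_dec m s); [split; auto| | |]; exfalso; apply Hcase; lra. }
  intros Hcase.
  assert (Hsat : exists T1, t0 <= T1 /\ forall t, T1 <= t -> forall i j, (i < N)%nat -> (j < N)%nat ->
          clamp s (v i t) = clamp s (v j t)).
  { destruct Hcase as [Hm|Hm].
    - destruct (unif_conv N x v t0 Hconv ((m - s) / 2) ltac:(lra)) as [T1 [HT1 HTa]].
        exists T1; split; [auto|]; intros t Ht i j Hi Hj.
        assert (Hc : forall k, (k < N)%nat -> Rabs (v k t - m) <= (m - s) / 2)
         by (apply (avg_close N v m t); [auto| apply Hsumt; lra| intros a b Ha Hb; left; apply (HTa t Ht a b Ha Hb)]).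
        pose proof (Rabs_le_inv _ _ (Hc i Hi)); pose proof (Rabs_le_inv _ _ (Hc j Hj)).
        rewrite (clamp_hi s (v i t)), (clamp_hi s (v j t)) by lra; reflexivity.
    - destruct (unif_conv N x v t0 Hconv ((- s - m) / 2) ltac:(lra)) as [T1 [HT1 HTa]].
        exists T1; split; [auto|]; intros t Ht i j Hi Hj.
        assert (Hc : forall k, (k < N)%nat -> Rabs (v k t - m) <= (- s - m) / 2)
         by (apply (avg_close N v m t); [auto| apply Hsumt; lra| intros a b Ha Hb; left; apply (HTa t Ht a b Ha Hb)]).
        pose proof (Rabs_le_inv _ _ (Hc i Hi)); pose proof (Rabs_le_inv _ _ (Hc j Hj)).
        rewrite (clamp_lo s (v i t)), (clamp_lo s (v j t)) by lra; reflexivity. }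
  destruct Hsat as [T1 [HT1 Hsat]].
  assert (HB0 : forall t, T1 <= t -> Bf N al (fun i => v i t) (fun i => clamp s (v i t)) = 0).
  { intros t Ht. unfold Bf. rewrite (sumN_ext _ _ (fun _ => 0)); [rewrite sumN_const; ring|].
    intros i Hi. rewrite (sumN_ext _ _ (fun _ => 0)); [rewrite sumN_const; ring|].
    intros j Hj. rewrite (Hsat t Ht i j Hi Hj). ring. }
  assert (Hconst : forall t, T1 <= t -> W t = W T1).
  { intros t Ht. apply Rle_antisym.
    - apply (W_nonincr N al s t0 x v m S); lra.
    - assert (D : forall u, T1 <= u -> derivable_pt_lim (fun u => -1 * W u) u (-1 * 0)).
      { intros u Hu. apply (dpl_scal (-1) W). eapply dpl_val; [|apply (D_W N al s t0 x v m S u); lra].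
        rewrite HB0 by lra. ring. }
      pose proof (nonincr (fun u => -1 * W u) (fun _ => -1 * 0) T1 D (fun _ _ => ltac:(lra)) T1 t (Rle_refl _) Ht).
      simpl in H. lra. }
  assert (HWT1 : W T1 <= 0).
  { destruct (Rle_dec (W T1) 0) as [|Hgt]; auto. exfalso.
    set (eta := W T1 / 2).
    assert (Heta : 0 < eta) by (unfold eta; lra).
    set (K2 := / 4 * A + / 2 * INR N + 1).
    assert (HK2 : 0 < K2) by (unfold K2; lra).
    set (rho := Rmin 1 (eta / K2)).
    assert (Hr : 0 < rho) by (apply Rmin_pos; [lra| apply Rdiv_lt_0_compat; lra]).
    assert (Hr1 : rho <= 1) by apply Rmin_l.
    assert (Hr2 : rho * K2 <= eta).
    { apply Rle_trans with (eta / K2 * K2); [apply Rmult_le_compat_r; [lra| apply Rmin_r]| right; field; lra]. }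
    destruct (unif_conv N x v t0 Hconv rho Hr) as [T2 [HT2 HTa]].
    set (t := Rmax T1 T2).
    assert (Ht1 : T1 <= t) by apply Rmax_l. assert (Ht2 : T2 <= t) by apply Rmax_r.
    assert (HQ : Qx t <= rho * rho * A).
    { unfold Qx, Qf, Bf, A, Atot. rewrite <- sumN_scal. apply sumN_le; intros i Hi.
      rewrite <- sumN_scal. apply sumN_le; intros j Hj.
      destruct (HTa t Ht2 i j Hi Hj) as [Hxij _].
      assert ((x i t - x j t) * (x i t - x j t) <= rho * rho).
      { rewrite <- (Rabs_right ((x i t - x j t) * (x i t - x j t))) by (apply Rle_ge, sqn).
        rewrite Rabs_mult. pose proof (Rabs_pos (x i t - x j t)). nra. }
      pose proof (Hnn i j Hi Hj). nra. }
    assert (Hc2 : c2 t <= INR N * (rho * rho)).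
    { unfold c2. rewrite <- sumN_const. apply sumN_le; intros i Hi.
      assert (Rabs (v i t - m) <= rho).
      { apply (avg_close N v m t); auto; [apply Hsumt; lra|].
        intros a b Ha Hb. left. apply (HTa t Ht2 a b Ha Hb). }
      rewrite <- (Rabs_right ((v i t - m) * (v i t - m))) by (apply Rle_ge, sqn).
      rewrite Rabs_mult. pose proof (Rabs_pos (v i t - m)). nra. }
    assert (Hrr : rho * rho <= rho) by nra.
    assert (W t <= rho * K2).
    { rewrite HW. assert (rho * rho * K2 <= rho * K2) by (apply Rmult_le_compat_r; lra).
      unfold K2 in *. nra. }
    rewrite (Hconst t Ht1) in H. unfold eta in Hr2. lra. }
  assert (HW0 : W t0 <= 0).
  { set (G := fun t => -1 * (W t * exp (4 * A * t))).
    assert (HG := nonincr G (fun t => -1 * ((- / 2 * Bf N al (fun i => v i t) (fun i => clamp s (v i t))) * exp (4 * A * t)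
                   + W t * (4 * A * exp (4 * A * t)))) t0).
    assert (H1 : G T1 <= G t0).
    { apply HG; try lra.
      - intros u Hu. apply (dpl_scal (-1) (fun t => W t * exp (4 * A * t))).
        apply (dpl_mult W (fun t => exp (4 * A * t))); [apply (D_W N al s t0 x v m S u Hu)| apply dpl_expl].
      - intros u Hu. pose proof (exp_pos (4 * A * u)).
        pose proof (B_sat_hi N al s (fun i => v i u) Hs Hnn).
        pose proof (Qf_upper N al (fun i => v i u) m Hnn). cbv beta in H1. fold A in H1. fold (c2 u) in H1.
        destruct (Hpos u). rewrite HW.
        assert (- / 2 * Bf N al (fun i => v i u) (fun i => clamp s (v i u)) + 4 * A * (/ 4 * Qx u + / 2 * c2 u) >= 0).
        { assert (0 <= A * Qx u) by nra. lra. }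
        nra. }
    unfold G in H1. pose proof (exp_pos (4 * A * T1)). pose proof (exp_pos (4 * A * t0)).
    destruct (Hpos T1). rewrite HW in HWT1.
    assert (HW1 : W T1 = 0) by (rewrite HW; lra).
    rewrite HW1 in H1. nra. }
  apply Hnc. intros i j Hi Hj. rewrite HW in HW0. destruct (Hpos t0).
  assert (HQ0 : Qx t0 = 0) by lra. assert (Hc0 : c2 t0 = 0) by lra.
  split.
  - pose proof (HP (fun k => x k t0) i j Hi Hj). fold (Qx t0) in H1. rewrite HQ0 in H1.
    apply Rminus_diag_uniq, sq_zero. lra.
  - assert ((v i t0 - m) * (v i t0 - m) <= c2 t0).
    { apply (sumN_term N (fun i => (v i t0 - m) * (v i t0 - m))); auto; intros; apply sqn. }
    assert ((v j t0 - m) * (v j t0 - m) <= c2 t0).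
    { apply (sumN_term N (fun i => (v i t0 - m) * (v i t0 - m))); auto; intros; apply sqn. }
    rewrite Hc0 in *. apply sq_zero in H1. apply sq_zero in H2. lra.
Qed.


Lemma abs_avg N S : (0 < N)%nat -> / INR N * Rabs S = Rabs (/ INR N * S).
Proof.
  intros HN. assert (0 < INR N) by (apply lt_0_INR; auto).
  rewrite Rabs_mult, (Rabs_right (/ INR N)); [reflexivity|]. left; apply Rinv_0_lt_compat; auto.
Qed.

Theorem theorem4 (N : nat) (alpha : nat -> nat -> R) (s t0 : R)
  (x v : nat -> R -> R)
  (Hsym : forall i j, (i < N)%nat -> (j < N)%nat -> alpha i j = alpha j i)
  (Hnn : forall i j, (i < N)%nat -> (j < N)%nat -> 0 <= alpha i j)
  (Hconn : connected_graph N alpha)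
  (Hs : 0 < s)
  (Hx : forall i t, (i < N)%nat -> t0 <= t ->
          derivable_pt_lim (x i) t (v i t))
  (Hv : forall i t, (i < N)%nat -> t0 <= t ->
          derivable_pt_lim (v i) t
            (sumN N (fun j => alpha i j *
               ((x j t - x i t) + (sat s (v j t) - sat s (v i t))))))
  (Hnc : ~ (forall i j, (i < N)%nat -> (j < N)%nat ->
              x i t0 = x j t0 /\ v i t0 = v j t0)) :
  (forall i j, (i < N)%nat -> (j < N)%nat ->
     tends_to_0_at_infty (fun t => x i t - x j t) /\
     tends_to_0_at_infty (fun t => v i t - v j t))
  <-> / INR N * Rabs (sumN N (fun i => v i t0)) <= s.
Proof.
  assert (HN : (0 < N)%nat).
  { destruct N; [exfalso; apply Hnc; intros; lia| lia]. }
  assert (HNr : 0 < INR N) by (apply lt_0_INR; auto).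
  assert (S : Sys N alpha s t0 x v) by (constructor; auto).
  rewrite abs_avg by auto. split.
  - intros Hconv. apply Rabs_le. apply (conv_onlyif N alpha s t0 x v S HN Hconn Hnc Hconv).
  - intros H. apply Rabs_le_inv in H.
    apply (conv_if N alpha s t0 x v (/ INR N * sumN N (fun i => v i t0)) S HN Hconn); [lra|].
    unfold vsum. field. lra.
Qed.
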